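(* Let $x_1\ge x_2\ge\dots\ge x_n$ be positive integers with $\sum_{i=1}^n x_i=2n-2$. Let $p,q$ be positive integers with $p\ge q>1$ and $p+q=n+1$. Then there exist sequences of positive integers $a_1,\dots,a_p$ and $b_1,\dots,b_q$ with $\sum_{i=1}^p a_i=2p-2$ and $\sum_{i=1}^q b_i=2q-2$, such that $a_1+b_1=x_1$ and the multiset $\{a_2,\dots,a_p,b_2,\dots,b_q\}$ equals the multiset $\{x_2,\dots,x_n\}$. *)

(* Defs.v *)
From mathcomp Require Import all_boot.
Set Implicit Arguments. Unset Strict Implicit. Unset Printing Implicit Defensive.
(* Sequences x_1..x_n are represented by s : seq nat with s`_0 = x_1 (nth 0 s 0). *)

(* Main.v *)
Require Import Defs.
From mathcomp Require Import all_boot.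
From mathcomp Require Import zify.

Lemma sum_le_const (s : seq nat) c : (forall v, v \in s -> v <= c) -> \sum_(v <- s) v <= size s * c.
Proof.
elim: s => [|a s IH] H; first by rewrite big_nil.
rewrite big_cons /=.
have h1 := H a (mem_head _ _).
have h2 : \sum_(v <- s) v <= size s * c by apply: IH => v vs; apply: H; rewrite inE vs orbT.
lia.
Qed.

Lemma sum_ge_const (s : seq nat) c : (forall v, v \in s -> c <= v) -> size s * c <= \sum_(v <- s) v.
Proof.
elim: s => [|a s IH] H; first by rewrite big_nil.
rewrite big_cons /=.
have h1 := H a (mem_head _ _).
have h2 : size s * c <= \sum_(v <- s) v by apply: IH => v vs; apply: H; rewrite inE vs orbT.
lia.
Qed.

Lemma geq_tr : transitive geq.
Proof. move=> a b c /= h1 h2; exact: leq_trans h2 h1. Qed.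

Lemma avg (t d : seq nat) : sorted geq (t ++ d) ->
  size t * \sum_(v <- d) v <= size d * \sum_(v <- t) v.
Proof.
rewrite (sorted_pairwise geq_tr) pairwise_cat => /and3P [Hr _ Hd].
case: d Hr Hd => [|M d'] Hr Hd; first by rewrite big_nil muln0.
have Hd1 : forall v, v \in M :: d' -> v <= M.
  move: Hd; rewrite pairwise_cons => /andP [/allP H _] v; rewrite inE => /orP [/eqP -> //|vd].
  exact: (H v vd).
have Ht1 : forall u, u \in t -> M <= u.
  move=> u ut; move/allrelP: Hr => H; exact: (H u M ut (mem_head _ _)).
have := sum_le_const _ _ Hd1; have := sum_ge_const _ _ Ht1.
set A := \sum_(v <- _) v; set B := \sum_(v <- _) v.
move=> h1 h2.
apply: (leq_trans (leq_mul (leqnn (size t)) h2)).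
rewrite mulnCA; exact: leq_mul (leqnn _) h1.
Qed.

Lemma ivt (f : nat -> nat) N w hi c S :
  (forall j, j < N -> f j <= f j.+1 + w) -> S <= f 0 + c -> f N <= hi ->
  S + w <= hi + 1 + c -> exists j, [/\ j <= N, S <= f j + c & f j <= hi].
Proof.
elim: N f => [|N IH] f Hs H0 HN Hw; first by exists 0.
case: (leqP (f 0) hi) => h0; first by exists 0.
have h1 := Hs 0 isT.
have [j [jN A B]] := IH (fun j => f j.+1) (fun j jl => Hs j.+1 jl) ltac:(lia) HN Hw.
by exists j.+1.
Qed.
Theorem lemma2 (n p q : nat) (x : seq nat) :
  size x = n ->
  all (fun v => 0 < v) x ->
  sorted geq x ->
  \sum_(v <- x) v = 2 * n - 2 ->
  0 < p -> 0 < q -> q <= p -> 1 < q -> p + q = n + 1 ->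
  exists (a b : seq nat),
    [/\ size a = p, size b = q,
        all (fun v => 0 < v) a & all (fun v => 0 < v) b] /\
    [/\ \sum_(v <- a) v = 2 * p - 2,
        \sum_(v <- b) v = 2 * q - 2,
        nth 0 a 0 + nth 0 b 0 = nth 0 x 0
      & perm_eq (behead a ++ behead b) (behead x)].
Proof.
move=> Hsz Hpos Hsort Hsum hp hq hqp hq1 hpq.
case: p hp hqp hpq => [|P] // _; case: q hq hq1 => [|Q] // _ hQ hqp hpq.
case: x Hsz Hpos Hsort Hsum => [|x1 y]; first by move=> /= Hn; lia.
move=> /= Hsz /andP [Hx1 /allP Hpos] Hsort.
rewrite big_cons => Hsum.
have Hm : size y = P + Q by lia.
have Hle : forall v, v \in y -> v <= x1.
  by move=> v vy; have /allP := order_path_min geq_tr Hsort; apply.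
have Hsy : sorted geq y := path_sorted Hsort.
set S := \sum_(v <- y) v in Hsum.
have HS1 := sum_le_const _ _ Hle.
rewrite -/S Hm in HS1.
have Hx2 : 2 <= x1.
  case: (leqP 2 x1) => // h; have : (P+Q)*x1 <= P+Q by rewrite -[X in _ <= X]muln1 leq_mul2l; apply/orP; right; lia.
  lia.
have HSm : S <= 2 * (P + Q) - 2 by lia.
have Hsplit : forall k, \sum_(v <- take k y) v + \sum_(v <- drop k y) v = S.
  by move=> k; rewrite -big_cat cat_take_drop.
have Hav : forall k, k <= P + Q -> (P + Q - k) * \sum_(v <- take k y) v >= k * \sum_(v <- drop k y) v.
  move=> k hk; have := avg (take k y) (drop k y); rewrite cat_take_drop => /(_ Hsy).
  by rewrite size_takel ?Hm // size_drop Hm.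
have HD1 : \sum_(v <- drop P y) v <= 2 * Q - 1.
  have := Hav P ltac:(lia); have := Hsplit P.
  set T := \sum_(v <- take _ _) v; set D := \sum_(v <- drop _ _) v.
  rewrite addKn => e1 e2.
  case: (leqP D (2*Q-1)) => // h.
  have : P * (2 * Q) <= Q * T by nia.
  nia.
have HD2 : \sum_(v <- drop Q y) v <= 2 * P - 1.
  have := Hav Q ltac:(lia); have := Hsplit Q.
  set T := \sum_(v <- take _ _) v; set D := \sum_(v <- drop _ _) v.
  rewrite addnK => e1 e2.
  case: (leqP D (2*P-1)) => // h.
  have : Q * (2 * P) <= P * T by nia.
  nia.
pose f j := \sum_(v <- take P (drop j y)) v.
have Hstep : forall j, j < Q -> f j <= f j.+1 + (x1 - 1).
  move=> j hj; rewrite /f.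
  have [P' eP] : exists P', P = P'.+1 by exists P.-1; lia.
  rewrite (drop_nth 0 (n:=j)); last lia.
  have hs : P' < size (drop j.+1 y) by rewrite size_drop; lia.
  rewrite eP /= (take_nth 0 hs) -cats1 big_cat big_cons big_seq1.
  have h1 : nth 0 y j <= x1 by apply: Hle; apply: mem_nth; rewrite Hm; lia.
  have h2 : 0 < nth 0 (drop j.+1 y) P' by apply: Hpos; apply: (mem_drop (n0:=j.+1)); apply: mem_nth.
  move: h1 h2; set A := \big[_/_]_(i <- take P' _) i; set B := nth 0 (drop _ _) _ => h1 h2; rewrite /=; lia.
have H0 : S <= f 0 + (2 * Q - 1).
  by rewrite /f drop0 -(Hsplit P); lia.
have HN : f Q <= 2 * P - 1.
  by rewrite /f take_oversize // size_drop Hm; lia.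
have Hw : S + (x1 - 1) <= 2 * P - 1 + 1 + (2 * Q - 1) by lia.
have [j [jQ L U]] := ivt f Q (x1 - 1) (2 * P - 1) (2 * Q - 1) S Hstep H0 HN Hw.
have Hj : \sum_(v <- take j y ++ drop P (drop j y)) v + f j = S.
  rewrite /S -{3}(cat_take_drop j y) -(cat_take_drop P (drop j y)) !big_cat /f /=; rewrite cat_take_drop; lia.
move: Hj L U; rewrite /f.
set A := take P (drop j y); set B := take j y ++ drop P (drop j y).
set g := \sum_(v <- B) v; set fj := \sum_(v <- A) v => Hj L U.
exists (2 * P - fj :: A), (2 * Q - g :: B).
split; split.
- by rewrite /= /A size_takel // size_drop Hm; lia.
- by rewrite /= /B size_cat size_takel ?Hm ?size_drop ?Hm; lia.
- rewrite /= ; apply/andP; split; first lia.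
  by apply/allP => v /mem_take /mem_drop; apply: Hpos.
- rewrite /= ; apply/andP; split; first lia.
  apply/allP => v; rewrite mem_cat => /orP [/mem_take|/mem_drop /mem_drop]; apply: Hpos.
- rewrite big_cons -/fj; lia.
- rewrite big_cons -/g; lia.
- rewrite /=; lia.
- by rewrite /= /A /B perm_catCA !cat_take_drop.
Qed.
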